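(* Let $a\geq b>0$, $k\geq 1$ and $t>0$. Then \[ \frac{ka\gamma-b\gamma}{k}+\frac{b}{k}\ln k + \frac{a-b}{t}+a\psi(t)-b\psi_k(t)\geq 0 . \]
   Context: $\gamma$ denotes the Euler–Mascheroni constant and $\psi(t)=\Gamma'(t)/\Gamma(t)$ is the digamma function for $t>0$, where $\Gamma$ is Euler's Gamma function. For $k>0$ and $t>0$, the $k$-Gamma function is $\Gamma_k(t)=\int_0^\infty e^{-x^k/k}x^{t-1}\,dx$, and $\psi_k(t)=\frac{d}{dt}\ln\Gamma_k(t)=\Gamma_k'(t)/\Gamma_k(t)$. *)

(* Defs.v *)
From Stdlib Require Import Reals.
From Coquelicot Require Import Coquelicot.
Open Scope R_scope.

Definition euler_gamma : R :=
  real (Lim_seq (fun n : nat => sum_n_m (fun j : nat => / INR j) 1 n - ln (INR n))).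

Definition Gamma (t : R) : R :=
  RInt_gen (fun x => exp (- x) * Rpower x (t - 1)) (at_right 0) (Rbar_locally p_infty).

Definition digamma (t : R) : R := Derive Gamma t / Gamma t.

Definition Gamma_k (k t : R) : R :=
  RInt_gen (fun x => exp (- (Rpower x k) / k) * Rpower x (t - 1))
    (at_right 0) (Rbar_locally p_infty).

Definition psi_k (k t : R) : R := Derive (fun s => ln (Gamma_k k s)) t.

(* Main.v *)
Require Import Defs.
From Stdlib Require Import Reals Lra Psatz FunctionalExtensionality.
From Coquelicot Require Import Coquelicot.
Open Scope R_scope.


Notation F0 := (at_right 0).
Notation Finf := (Rbar_locally p_infty).

Lemma ball_R (x e y : R) : ball x e y <-> Rabs (y - x) < e.
Proof. unfold ball; simpl; unfold AbsRing_ball, abs, minus, plus, opp; simpl. tauto. Qed.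

Lemma F0_lt (d : R) : 0 < d -> F0 (fun x => 0 < x < d).
Proof.
  intros Hd. exists (mkposreal d Hd). intros y Hy Hy0. apply ball_R in Hy. simpl in Hy.
  assert (Hy2 : Rabs (y - 0) < d) by exact Hy. rewrite Rminus_0_r in Hy2. apply Rabs_def2 in Hy2. lra.
Qed.

Lemma Finf_gt (M : R) : Finf (fun x => M < x).
Proof. exists M. auto. Qed.

Lemma F0_elim (P : R -> Prop) : F0 P -> exists d, 0 < d /\ forall x, 0 < x < d -> P x.
Proof.
  intros [e He]. exists e. split. apply cond_pos. intros x Hx. apply He.
  apply ball_R. rewrite Rminus_0_r. rewrite Rabs_pos_eq; lra. lra.
Qed.

Lemma abs_bnd (x y : R) : Rabs x <= y -> - y <= x <= y.
Proof. intros H. pose proof (Rle_abs x). pose proof (Rle_abs (- x)). rewrite Rabs_Ropp in H1. lra. Qed.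

Lemma RInt_correctR (f : R -> R) a b : ex_RInt f a b -> is_RInt f a b (RInt f a b).
Proof. intros H. apply (RInt_correct (V:=R_CompleteNormedModule)); exact H. Qed.

Lemma ex_RInt_pos (f : R -> R) a b : (forall x, 0 < x -> continuous f x) -> 0 < a -> 0 < b -> ex_RInt f a b.
Proof.
  intros Hc Ha Hb. apply (ex_RInt_continuous (V:=R_CompleteNormedModule)). intros z Hz. apply Hc.
  destruct Hz as [Hz _]. apply Rlt_le_trans with (2 := Hz). apply Rmin_glb_lt; auto.
Qed.

Lemma RInt_mono_interval (f : R -> R) a b a' b' :
  (forall x, 0 < x -> continuous f x) -> (forall x, 0 < x -> 0 <= f x) ->
  0 < a' -> a' <= a -> a <= b -> b <= b' -> RInt f a b <= RInt f a' b'.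
Proof.
  intros Hc Hp H1 H2 H3 H4.
  assert (E : forall u v, 0 < u -> 0 < v -> ex_RInt f u v) by (intros; apply ex_RInt_pos; auto).
  rewrite <- (RInt_Chasles f a' a b') by (apply E; lra).
  rewrite <- (RInt_Chasles f a b b') by (apply E; lra).
  unfold plus; simpl.
  assert (0 <= RInt f a' a) by (apply RInt_ge_0; auto; try apply E; try lra; intros; apply Hp; lra).
  assert (0 <= RInt f b b') by (apply RInt_ge_0; auto; try apply E; try lra; intros; apply Hp; lra).
  lra.
Qed.

Lemma ex_gen_pos (f : R -> R) (M : R) :
  (forall x, 0 < x -> continuous f x) -> (forall x, 0 < x -> 0 <= f x) ->
  (forall a b, 0 < a -> a <= b -> RInt f a b <= M) -> ex_RInt_gen f F0 Finf.
Proof.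
  intros Hc Hp HM.
  set (E := fun z => exists a b, 0 < a <= b /\ z = RInt f a b).
  destruct (completeness E) as [S [HS1 HS2]].
  { exists M. intros z [a [b [Hab ->]]]. apply HM; lra. }
  { exists (RInt f 1 1). exists 1, 1. split; auto; lra. }
  exists S. intros P [eps HP].
  assert (Hz : exists a0 b0, 0 < a0 <= b0 /\ S - eps < RInt f a0 b0).
  { destruct (Classical_Prop.classic (exists a0 b0, 0 < a0 <= b0 /\ S - eps < RInt f a0 b0)) as [H|H]; auto.
    exfalso. assert (S <= S - eps).
    { apply HS2. intros z [a [b [Hab ->]]]. apply Rnot_lt_le. intros Hl. apply H. exists a, b; auto. }
    destruct eps; simpl in *; lra. }
  destruct Hz as [a0 [b0 [Hab0 Hlt]]].
  apply Filter_prod with (Q := fun a => 0 < a < a0) (R := fun b => b0 < b).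
  apply F0_lt; lra. apply Finf_gt.
  intros a b Ha Hb. exists (RInt f a b). split.
  apply RInt_correctR. apply ex_RInt_pos; auto; lra.
  apply HP. apply ball_R.
  assert (RInt f a b <= S) by (apply HS1; exists a, b; split; auto; lra).
  assert (RInt f a0 b0 <= RInt f a b) by (apply RInt_mono_interval; auto; lra).
  apply Rabs_def1; lra.
Qed.

Lemma le_gen_pos (f : R -> R) (l : R) a b :
  (forall x, 0 < x -> continuous f x) -> (forall x, 0 < x -> 0 <= f x) ->
  is_RInt_gen f F0 Finf l -> 0 < a -> a <= b -> RInt f a b <= l.
Proof.
  intros Hc Hp Hl Ha Hab. apply Rnot_lt_le. intros Hlt.
  assert (Hpos : 0 < RInt f a b - l) by lra.
  specialize (Hl (ball l (mkposreal _ Hpos))). 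
  destruct Hl as [Q R' HQ HR HQR]. apply locally_ball.
  destruct (F0_elim _ HQ) as [d [Hd HQd]].
  destruct HR as [M HM].
  set (a' := Rmin a d / 2). set (b' := Rmax b M + 1).
  assert (Ha' : 0 < a' < a).
  { unfold a'. assert (0 < Rmin a d) by (apply Rmin_glb_lt; auto). assert (Rmin a d <= a) by apply Rmin_l. lra. }
  assert (Ha'd : a' < d) by (unfold a'; assert (Rmin a d <= d) by apply Rmin_r; assert (0 < Rmin a d) by (apply Rmin_glb_lt; auto); lra).
  assert (Hb' : b < b' /\ M < b') by (unfold b'; split; [assert (b <= Rmax b M) by apply Rmax_l|assert (M <= Rmax b M) by apply Rmax_r]; lra).
  destruct (HQR a' b') as [y [Hy1 Hy2]]. apply HQd; lra. apply HM; lra.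
  simpl in Hy1. apply (is_RInt_unique (V:=R_CompleteNormedModule)) in Hy1. subst y.
  apply ball_R in Hy2. simpl in Hy2. apply Rabs_def2 in Hy2.
  assert (RInt f a b <= RInt f a' b') by (apply RInt_mono_interval; auto; lra). unfold minus, plus, opp in Hy2; simpl in Hy2. lra.
Qed.

Lemma IG_zero : is_RInt_gen (fun _ : R => 0) F0 Finf 0.
Proof.
  intros P [e HP]. apply Filter_prod with (Q := fun _ => True) (R := fun _ => True).
  apply filter_true. apply filter_true. intros a b _ _. exists 0. split.
  assert (H := is_RInt_const (V:=R_NormedModule) a b 0).
  assert (E : scal (b - a) (0:R_NormedModule) = 0) by (unfold scal; simpl; unfold mult; simpl; ring).
  rewrite E in H. exact H.
  apply HP. apply ball_center.
Qed.

Lemma IG_norm (f g : R -> R) lf lg :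
  (forall x, 0 < x -> Rabs (f x) <= g x) ->
  is_RInt_gen f F0 Finf lf -> is_RInt_gen g F0 Finf lg -> Rabs lf <= lg.
Proof.
  intros H Hf Hg. apply (RInt_gen_norm (Fa := F0) (Fb := Finf) f g lf lg); auto.
  apply Filter_prod with (Q := fun a => 0 < a < 1) (R := fun b => 1 < b).
  apply F0_lt; lra. apply Finf_gt. intros; simpl; lra.
  apply Filter_prod with (Q := fun a => 0 < a < 1) (R := fun b => 1 < b).
  apply F0_lt; lra. apply Finf_gt. intros a b Ha Hb x Hx. simpl in *. apply H. lra.
Qed.

Lemma IG_nonneg (g : R -> R) lg : (forall x, 0 < x -> 0 <= g x) -> is_RInt_gen g F0 Finf lg -> 0 <= lg.
Proof.
  intros H Hg. rewrite <- Rabs_R0. apply (IG_norm (fun _ => 0) g); auto.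
  intros. rewrite Rabs_R0; auto. apply IG_zero.
Qed.

Lemma ex_gen_dom (f g : R -> R) :
  (forall x, 0 < x -> continuous f x) -> (forall x, 0 < x -> continuous g x) ->
  (forall x, 0 < x -> Rabs (f x) <= g x) -> ex_RInt_gen g F0 Finf -> ex_RInt_gen f F0 Finf.
Proof.
  intros Hf Hg H [lg Hlg].
  assert (Hh : ex_RInt_gen (fun x => f x + g x) F0 Finf).
  { apply ex_gen_pos with (M := 2 * lg).
    intros x Hx. apply (continuous_plus f g); auto.
    intros x Hx. specialize (H x Hx). apply abs_bnd in H. lra.
    intros a b Ha Hab.
    assert (RInt (fun x => f x + g x) a b <= RInt (fun x => 2 * g x) a b).
    { apply RInt_le; auto. apply ex_RInt_pos; auto; try lra. intros; apply (continuous_plus f g); auto.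
      apply ex_RInt_pos; auto; try lra. intros. apply (continuous_scal_r 2 g); auto.
      intros x Hx. specialize (H x ltac:(lra)). apply abs_bnd in H. lra. }
    assert (RInt (fun x => 2 * g x) a b = 2 * RInt g a b).
    { apply (RInt_scal g a b 2). apply ex_RInt_pos; auto; lra. }
    assert (RInt g a b <= lg) by (apply (le_gen_pos g lg a b); auto; intros x Hx; specialize (H x Hx); pose proof (Rabs_pos (f x)); lra).
    lra. }
  destruct Hh as [lh Hlh].
  exists (minus lh lg).
  apply (is_RInt_gen_ext (fun y => minus (f y + g y) (g y))).
  apply filter_forall. intros. unfold minus, plus, opp; simpl; ring.
  exact (is_RInt_gen_minus _ _ _ _ Hlh Hlg).
Qed.


Lemma exp_INR_mult (n : nat) (x : R) : exp (INR n * x) = exp x ^ n.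
Proof.
  induction n. simpl. rewrite Rmult_0_l. apply exp_0.
  rewrite S_INR. replace ((INR n + 1) * x) with (INR n * x + x) by ring.
  rewrite exp_plus, IHn. simpl. ring.
Qed.

Lemma abs_pow_bound (j : nat) (d y : R) : 0 < d ->
  Rabs y ^ j <= (INR j / d) ^ j * exp (d * Rabs y).
Proof.
  intros Hd. destruct j as [|j].
  - simpl. pose proof (exp_ineq1_le (d * Rabs y)). pose proof (Rabs_pos y).
    assert (0 <= d * Rabs y) by (apply Rmult_le_pos; lra). lra.
  - set (n := S j). assert (Hn : 0 < INR n) by (apply lt_0_INR; unfold n; lia).
    replace (d * Rabs y) with (INR n * (d * Rabs y / INR n)) by (field; lra).
    rewrite exp_INR_mult.
    assert (H1 : d * Rabs y / INR n <= exp (d * Rabs y / INR n)).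
    { pose proof (exp_ineq1_le (d * Rabs y / INR n)). lra. }
    assert (H0 : 0 <= d * Rabs y / INR n).
    { apply Rmult_le_pos. apply Rmult_le_pos. lra. apply Rabs_pos. left; apply Rinv_0_lt_compat; lra. }
    pose proof (pow_incr _ _ n (conj H0 H1)) as H2.
    replace (Rabs y ^ n) with ((INR n / d) ^ n * (d * Rabs y / INR n) ^ n).
    apply Rmult_le_compat_l. apply pow_le. left; apply Rdiv_lt_0_compat; lra. exact H2.
    rewrite <- Rpow_mult_distr. f_equal. field. lra.
Qed.

Lemma exp_abs_le (a y : R) : exp (a * Rabs y) <= exp (a * y) + exp (- (a * y)).
Proof.
  pose proof (exp_pos (a * y)). pose proof (exp_pos (- (a * y))).
  destruct (Rle_or_lt 0 y).
  rewrite Rabs_pos_eq by lra. lra.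
  rewrite Rabs_left by lra. replace (a * - y) with (- (a * y)) by ring. lra.
Qed.

Lemma phi_bound (z : R) : Rabs (exp z - 1 - z) <= z ^ 2 * exp (Rabs z).
Proof.
  pose proof (exp_ineq1_le z) as H1.
  pose proof (exp_ineq1_le (- z)) as H2.
  pose proof (exp_pos z) as H3.
  assert (H4 : exp z * exp (- z) = 1) by (rewrite <- exp_plus; replace (z + - z) with 0 by ring; apply exp_0).
  rewrite Rabs_pos_eq by lra.
  destruct (Rle_or_lt 0 z) as [Hz|Hz].
  - rewrite Rabs_pos_eq by lra.
    assert (exp z - 1 <= z * exp z) by nra.
    assert (z * (exp z - 1) <= z * (z * exp z)) by (apply Rmult_le_compat_l; lra).
    nra.
  - rewrite Rabs_left by lra.
    assert (H5 : exp z * (1 - z) <= 1).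
    { assert (exp z * (1 - z) <= exp z * exp (- z)) by (apply Rmult_le_compat_l; lra). lra. }
    assert (H6 : exp z <= 1 + z + z ^ 2).
    { assert ((1 - z) * (exp z - (1 + z + z ^ 2)) <= 0) by nra. nra. }
    assert (z ^ 2 <= z ^ 2 * exp (- z)) by (assert (0 <= z ^ 2) by nra; nra).
    lra.
Qed.

Lemma contR (f : R -> R) x : ex_derive f x -> continuous f x.
Proof. intros H. apply (ex_derive_continuous (K:=R_AbsRing) (V:=R_NormedModule)). exact H. Qed.

Definition Ef (c x : R) : R := exp (- x) * Rpower x c.
Definition J (m : nat) (s x : R) : R := exp (- x) * Rpower x (s - 1) * ln x ^ m.

Lemma Ef_cont c x : 0 < x -> continuous (Ef c) x.
Proof. intros Hx. apply contR. unfold Ef, Rpower. auto_derive. lra. Qed.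

Lemma J_cont m s x : 0 < x -> continuous (J m s) x.
Proof. intros Hx. apply contR. unfold J, Rpower. auto_derive. repeat split; lra. Qed.

Lemma Ef_pos c x : 0 < Ef c x.
Proof. unfold Ef, Rpower. apply Rmult_lt_0_compat; apply exp_pos. Qed.


Lemma exp_le_mono x y : x <= y -> exp x <= exp y.
Proof. intros [H|H]. left; apply exp_increasing; auto. subst; lra. Qed.

Lemma Rpower_cont c x : 0 < x -> continuous (fun y => Rpower y c) x.
Proof. intros Hx. apply contR. unfold Rpower. auto_derive. lra. Qed.

Lemma Rpower_one y : Rpower 1 y = 1.
Proof. unfold Rpower. rewrite ln_1, Rmult_0_r. apply exp_0. Qed.

Lemma RInt_Rpower c a b : 0 < a -> 0 < b -> c + 1 <> 0 ->
  RInt (fun x => Rpower x c) a b = (Rpower b (c + 1) - Rpower a (c + 1)) / (c + 1).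
Proof.
  intros Ha Hb Hc.
  apply (is_RInt_unique (V:=R_CompleteNormedModule)).
  assert (H := is_RInt_derive (V:=R_CompleteNormedModule) (fun x => Rpower x (c + 1) / (c + 1)) (fun x => Rpower x c) a b).
  unfold minus, plus, opp in H; simpl in H.
  replace ((Rpower b (c + 1) - Rpower a (c + 1)) / (c + 1)) with
    (Rpower b (c + 1) / (c + 1) + - (Rpower a (c + 1) / (c + 1))) by (field; auto).
  apply H.
  - intros x Hx. assert (0 < x) by (destruct Hx as [Hx _]; apply Rlt_le_trans with (2 := Hx); apply Rmin_glb_lt; auto).
    apply is_derive_Reals.
    replace (Rpower x c) with ((c + 1) * Rpower x (c + 1 - 1) * / (c + 1)).
    apply (derivable_pt_lim_scal_right (fun y => Rpower y (c + 1))). apply derivable_pt_lim_power; auto.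
    replace (c + 1 - 1) with c by ring. field. auto.
  - intros x Hx. apply Rpower_cont. destruct Hx as [Hx _]; apply Rlt_le_trans with (2 := Hx); apply Rmin_glb_lt; auto.
Qed.

Lemma RInt_invsq a b : 0 < a -> 0 < b -> RInt (fun x => / x ^ 2) a b = / a - / b.
Proof.
  intros Ha Hb.
  apply (is_RInt_unique (V:=R_CompleteNormedModule)).
  assert (H := is_RInt_derive (V:=R_CompleteNormedModule) (fun x => - / x) (fun x => / x ^ 2) a b).
  unfold minus, plus, opp in H; simpl in H.
  replace (/ a - / b) with (- / b + - - / a) by ring.
  apply H.
  - intros x Hx. assert (0 < x) by (destruct Hx as [Hx _]; apply Rlt_le_trans with (2 := Hx); apply Rmin_glb_lt; auto).
    auto_derive. lra. field. lra.
  - intros x Hx. assert (0 < x) by (destruct Hx as [Hx _]; apply Rlt_le_trans with (2 := Hx); apply Rmin_glb_lt; auto).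
    apply contR. auto_derive. repeat split; try lra; try (intro; nra).
Qed.

Lemma Ef_le_pow c x : 0 < x -> Ef c x <= Rpower x c.
Proof.
  intros Hx. unfold Ef. pose proof (exp_pos (-x)). assert (exp (- x) <= 1).
  { rewrite <- exp_0. destruct (Req_dec x 0). lra. left. apply exp_increasing. lra. }
  unfold Rpower. pose proof (exp_pos (c * ln x)). nra.
Qed.

Lemma Ef_le_invsq c x : 0 < x -> 0 < c + 2 ->
  Ef c x <= exp ((c + 2) * ln (c + 2)) * / x ^ 2.
Proof.
  intros Hx Hc.
  assert (Hx2 : 0 < x ^ 2) by nra.
  apply (Rmult_le_reg_r (x ^ 2)); auto.
  rewrite Rmult_assoc, Rinv_l, Rmult_1_r by lra.
  assert (E : Ef c x * x ^ 2 = exp (- x + (c + 2) * ln x)).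
  { unfold Ef, Rpower. replace (- x + (c + 2) * ln x) with (- x + c * ln x + ln x + ln x) by ring.
    rewrite !exp_plus, exp_ln by auto. ring. }
  rewrite E. apply exp_le_mono.
  assert (Hu : 0 < x / (c + 2)) by (apply Rdiv_lt_0_compat; lra).
  pose proof (exp_ineq1_le (ln (x / (c + 2)))) as H. rewrite exp_ln in H by auto.
  rewrite ln_div in H by lra.
  assert ((c + 2) * (ln x - ln (c + 2)) <= (c + 2) * (x / (c + 2) - 1)) by (apply Rmult_le_compat_l; lra).
  replace ((c + 2) * (x / (c + 2) - 1)) with (x - (c + 2)) in H0 by (field; lra).
  nra.
Qed.

Lemma ex_Ef c : -1 < c -> ex_RInt_gen (Ef c) F0 Finf.
Proof.
  intros Hc. set (K := exp ((c + 2) * ln (c + 2))).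
  assert (HK : 0 < K) by apply exp_pos.
  apply ex_gen_pos with (M := 1 / (c + 1) + K).
  - intros; apply Ef_cont; auto.
  - intros; left; apply Ef_pos.
  - intros a b Ha Hab.
    set (a' := Rmin a 1). set (b' := Rmax b 1).
    assert (Ha' : 0 < a' <= a /\ a' <= 1) by (unfold a'; split; [split; [apply Rmin_glb_lt; lra| apply Rmin_l]|apply Rmin_r]).
    assert (Hb' : b <= b' /\ 1 <= b') by (unfold b'; split; [apply Rmax_l|apply Rmax_r]).
    assert (HE : forall u v, 0 < u -> 0 < v -> ex_RInt (Ef c) u v) by (intros; apply ex_RInt_pos; auto; intros; apply Ef_cont; auto).
    apply Rle_trans with (RInt (Ef c) a' b').
    { apply RInt_mono_interval; [intros; apply Ef_cont; auto | intros; left; apply Ef_pos | lra..]. }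
    rewrite <- (RInt_Chasles (V:=R_CompleteNormedModule) (Ef c) a' 1 b') by (apply HE; lra).
    unfold plus; simpl.
    assert (H1 : RInt (Ef c) a' 1 <= 1 / (c + 1)).
    { apply Rle_trans with (RInt (fun x => Rpower x c) a' 1).
      apply RInt_le; try lra. apply HE; lra. apply ex_RInt_pos; try lra. intros; apply Rpower_cont; auto.
      intros x Hx; apply Ef_le_pow; lra.
      rewrite RInt_Rpower by lra. rewrite Rpower_one.
      assert (0 < Rpower a' (c + 1)) by (unfold Rpower; apply exp_pos).
      apply Rmult_le_compat_r. left; apply Rinv_0_lt_compat; lra. lra. }
    assert (H2 : RInt (Ef c) 1 b' <= K).
    { assert (HI : ex_RInt (fun x => / x ^ 2) 1 b').
      { apply ex_RInt_pos; try lra. intros x Hx. apply contR. auto_derive. repeat split; try lra; try (intro; nra). }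
      apply Rle_trans with (RInt (fun x => K * / x ^ 2) 1 b').
      apply RInt_le; try lra. apply HE; lra. apply ex_RInt_pos; try lra.
      intros x Hx. apply contR. auto_derive. repeat split; try lra; try (intro; nra).
      intros x Hx; apply Ef_le_invsq; lra.
      assert (HS : RInt (fun x => K * / x ^ 2) 1 b' = K * RInt (fun x => / x ^ 2) 1 b').
      { exact (RInt_scal (V:=R_CompleteNormedModule) (fun x => / x ^ 2) 1 b' K HI). }
      rewrite HS.
      rewrite RInt_invsq by lra. unfold scal; simpl; unfold mult; simpl.
      assert (0 < / b') by (apply Rinv_0_lt_compat; lra). rewrite Rinv_1. nra. }
    lra.
Qed.


Definition Dfun (s d x : R) : R := Ef (s - 1 + 2 * d) x + Ef (s - 1 - 2 * d) x.

Lemma kern_bound j d s x : 0 < d -> 0 < x ->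
  exp (- x) * Rpower x (s - 1) * (Rabs (ln x) ^ j * exp (d * Rabs (ln x)))
  <= (INR j / d) ^ j * Dfun s d x.
Proof.
  intros Hd Hx. set (y := ln x).
  assert (H1 := abs_pow_bound j d y Hd).
  assert (H2 : Rabs y ^ j * exp (d * Rabs y) <= (INR j / d) ^ j * (exp (2 * d * y) + exp (- (2 * d * y)))).
  { apply Rle_trans with ((INR j / d) ^ j * exp (2 * d * Rabs y)).
    replace (2 * d * Rabs y) with (d * Rabs y + d * Rabs y) by ring. rewrite exp_plus.
    pose proof (exp_pos (d * Rabs y)). rewrite <- Rmult_assoc. apply Rmult_le_compat_r; lra.
    apply Rmult_le_compat_l. apply pow_le. apply Rmult_le_pos. apply pos_INR. left; apply Rinv_0_lt_compat; auto.
    apply exp_abs_le. }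
  assert (HP : 0 < exp (- x) * Rpower x (s - 1)) by (unfold Rpower; apply Rmult_lt_0_compat; apply exp_pos).
  apply Rle_trans with (exp (- x) * Rpower x (s - 1) * ((INR j / d) ^ j * (exp (2 * d * y) + exp (- (2 * d * y))))).
  apply Rmult_le_compat_l; lra.
  unfold Dfun, Ef, Rpower. fold y.
  replace ((s - 1 + 2 * d) * y) with ((s - 1) * y + 2 * d * y) by ring.
  replace ((s - 1 - 2 * d) * y) with ((s - 1) * y + - (2 * d * y)) by ring.
  rewrite !exp_plus. right; ring.
Qed.

Lemma Dfun_cont s d x : 0 < x -> continuous (Dfun s d) x.
Proof. intros Hx. apply contR. unfold Dfun, Ef, Rpower. auto_derive. repeat split; lra. Qed.

Lemma Dfun_pos s d x : 0 <= Dfun s d x.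
Proof. unfold Dfun. pose proof (Ef_pos (s - 1 + 2 * d) x). pose proof (Ef_pos (s - 1 - 2 * d) x). lra. Qed.

Lemma ex_Dfun s d : 0 < 2 * d < s -> ex_RInt_gen (Dfun s d) F0 Finf.
Proof.
  intros H. destruct (ex_Ef (s - 1 + 2 * d)) as [l1 H1]. lra.
  destruct (ex_Ef (s - 1 - 2 * d)) as [l2 H2]. lra.
  exists (plus l1 l2). exact (is_RInt_gen_plus _ _ _ _ H1 H2).
Qed.

Lemma IG_scal (f : R -> R) (c l : R) : is_RInt_gen f F0 Finf l -> is_RInt_gen (fun x => c * f x) F0 Finf (c * l).
Proof. intros H. exact (is_RInt_gen_scal _ c _ H). Qed.

Lemma ex_J m s : 0 < s -> ex_RInt_gen (J m s) F0 Finf.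
Proof.
  intros Hs. set (d := s / 4).
  destruct (ex_Dfun s d) as [LD HD]. unfold d; lra.
  apply ex_gen_dom with (g := fun x => (INR m / d) ^ m * Dfun s d x).
  - intros; apply J_cont; auto.
  - intros x Hx. apply contR. unfold Dfun, Ef, Rpower. auto_derive. repeat split; lra.
  - intros x Hx. apply Rle_trans with (2 := kern_bound m d s x ltac:(unfold d; lra) Hx).
    unfold J. rewrite Rabs_mult, Rabs_mult, <- RPow_abs.
    assert (HP : 0 < exp (- x) * Rpower x (s - 1)) by (unfold Rpower; apply Rmult_lt_0_compat; apply exp_pos).
    rewrite (Rabs_pos_eq (exp (- x))) by (left; apply exp_pos).
    rewrite (Rabs_pos_eq (Rpower x (s - 1))) by (unfold Rpower; left; apply exp_pos).
    assert (1 <= exp (d * Rabs (ln x))).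
    { pose proof (exp_ineq1_le (d * Rabs (ln x))). assert (0 <= d * Rabs (ln x)) by (apply Rmult_le_pos; [unfold d; lra|apply Rabs_pos]). lra. }
    pose proof (pow_le (Rabs (ln x)) m (Rabs_pos _)).
    assert (0 <= exp (- x) * Rpower x (s - 1) * Rabs (ln x) ^ m) by (apply Rmult_le_pos; lra).
    nra.
  - exists ((INR m / d) ^ m * LD). apply IG_scal; auto.
Qed.

Definition I (m : nat) (s : R) : R := RInt_gen (J m s) F0 Finf.

Lemma IG_J m s : 0 < s -> is_RInt_gen (J m s) F0 Finf (I m s).
Proof. intros Hs. apply (RInt_gen_correct (V:=R_CompleteNormedModule)). apply ex_J; auto. Qed.

Lemma J_diff_bound m s h d x : 0 < d -> Rabs h <= d -> 0 < x ->
  Rabs (J m (s + h) x - J m s x - h * J (S m) s x)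
  <= h ^ 2 * ((INR (S (S m)) / d) ^ (S (S m)) * Dfun s d x).
Proof.
  intros Hd Hh Hx. set (y := ln x). set (A := exp (- x) * Rpower x (s - 1)).
  assert (HA : 0 < A) by (unfold A, Rpower; apply Rmult_lt_0_compat; apply exp_pos).
  assert (E : J m (s + h) x - J m s x - h * J (S m) s x = A * y ^ m * (exp (h * y) - 1 - h * y)).
  { unfold J, A, Rpower. fold y. replace ((s + h - 1) * y) with ((s - 1) * y + h * y) by ring.
    rewrite exp_plus. simpl. ring. }
  rewrite E. rewrite Rabs_mult, Rabs_mult, <- RPow_abs, (Rabs_pos_eq A) by lra.
  assert (Hphi := phi_bound (h * y)).
  assert (Hy0 : 0 <= Rabs y) by apply Rabs_pos.
  assert (H1 : exp (Rabs (h * y)) <= exp (d * Rabs y)).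
  { apply exp_le_mono. rewrite Rabs_mult. apply Rmult_le_compat_r; auto. }
  assert (H2 : (h * y) ^ 2 = h ^ 2 * Rabs y ^ 2) by (rewrite pow2_abs; ring).
  assert (Hm : 0 <= Rabs y ^ m) by (apply pow_le; auto).
  assert (Hphi2 : Rabs (exp (h * y) - 1 - h * y) <= h ^ 2 * (Rabs y ^ 2 * exp (d * Rabs y))).
  { rewrite H2 in Hphi. assert (0 <= h ^ 2 * Rabs y ^ 2) by (apply Rmult_le_pos; [nra | apply pow_le; auto]).
    apply Rle_trans with (1 := Hphi). rewrite <- Rmult_assoc. apply Rmult_le_compat_l; auto. }
  assert (K := kern_bound (S (S m)) d s x Hd Hx). fold y A in K.
  assert (E2 : Rabs y ^ S (S m) = Rabs y ^ m * Rabs y ^ 2) by (simpl; ring).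
  rewrite E2 in K.
  apply Rle_trans with (A * Rabs y ^ m * (h ^ 2 * (Rabs y ^ 2 * exp (d * Rabs y)))).
  apply Rmult_le_compat_l; auto. apply Rmult_le_pos; lra.
  assert (0 <= h ^ 2) by nra.
  replace (A * Rabs y ^ m * (h ^ 2 * (Rabs y ^ 2 * exp (d * Rabs y)))) with
    (h ^ 2 * (A * (Rabs y ^ m * Rabs y ^ 2 * exp (d * Rabs y)))) by ring.
  apply Rmult_le_compat_l; auto.
Qed.

Lemma I_deriv m s : 0 < s -> is_derive (I m) s (I (S m) s).
Proof.
  intros Hs. apply is_derive_Reals. intros eps Heps.
  set (d := s / 4). assert (Hd : 0 < d) by (unfold d; lra).
  destruct (ex_Dfun s d) as [LD HD]. unfold d; lra.
  set (C0 := (INR (S (S m)) / d) ^ (S (S m))).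
  assert (HC0 : 0 <= C0) by (apply pow_le; apply Rmult_le_pos; [apply pos_INR|left; apply Rinv_0_lt_compat; auto]).
  assert (HLD : 0 <= LD) by (apply (IG_nonneg (Dfun s d)); auto; intros; apply Dfun_pos).
  set (C := C0 * LD). assert (HC : 0 <= C) by (apply Rmult_le_pos; auto).
  assert (Hdel : 0 < Rmin d (eps / (C + 1))) by (apply Rmin_glb_lt; auto; apply Rdiv_lt_0_compat; lra).
  exists (mkposreal _ Hdel). intros h Hh0 Hh. simpl in Hh.
  assert (Hh1 : Rabs h <= d) by (apply Rle_trans with (2 := Rmin_l d (eps / (C + 1))); lra).
  assert (Hh2 : Rabs h < eps / (C + 1)) by (apply Rlt_le_trans with (2 := Rmin_r d (eps / (C + 1))); lra).
  assert (Hsh : 0 < s + h) by (apply abs_bnd in Hh1; unfold d in Hh1; lra).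
  assert (G1 := IG_J m (s + h) Hsh). assert (G2 := IG_J m s Hs). assert (G3 := IG_J (S m) s Hs).
  assert (G : is_RInt_gen (fun x => J m (s + h) x - J m s x - h * J (S m) s x) F0 Finf
                 (I m (s + h) - I m s - h * I (S m) s)).
  { exact (is_RInt_gen_minus _ _ _ _ (is_RInt_gen_minus _ _ _ _ G1 G2) (IG_scal _ h _ G3)). }
  assert (GB : is_RInt_gen (fun x => h ^ 2 * (C0 * Dfun s d x)) F0 Finf (h ^ 2 * (C0 * LD))).
  { apply IG_scal. apply IG_scal. auto. }
  assert (B := IG_norm _ _ _ _ (fun x Hx => J_diff_bound m s h d x Hd Hh1 Hx) G GB).
  fold C in B.
  replace ((I m (s + h) - I m s) / h - I (S m) s) with ((I m (s + h) - I m s - h * I (S m) s) / h) by (field; auto).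
  unfold Rdiv. rewrite Rabs_mult, Rabs_inv.
  assert (Hah : 0 < Rabs h) by (apply Rabs_pos_lt; auto).
  apply Rle_lt_trans with (h ^ 2 * C * / Rabs h).
  apply Rmult_le_compat_r. left; apply Rinv_0_lt_compat; auto. lra.
  replace (h ^ 2 * C * / Rabs h) with (Rabs h * C) by (rewrite <- pow2_abs; field; lra).
  apply Rle_lt_trans with (eps / (C + 1) * C). apply Rmult_le_compat_r; lra.
  apply Rmult_lt_reg_r with (C + 1). lra.
  replace (eps / (C + 1) * C * (C + 1)) with (eps * C) by (field; lra). nra.
Qed.


Lemma Gamma_I : Gamma = I 0.
Proof.
  apply functional_extensionality. intros s. unfold Gamma, I, J.
  f_equal. apply functional_extensionality. intros x. simpl. ring.
Qed.

Lemma I0_pos s : 0 < s -> 0 < I 0 s.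
Proof.
  intros Hs. apply Rlt_le_trans with (RInt (J 0 s) 1 2).
  apply RInt_gt_0. lra. intros x Hx. unfold J, Rpower. simpl. rewrite Rmult_1_r. apply Rmult_lt_0_compat; apply exp_pos.
  intros x Hx. apply J_cont; lra.
  apply (le_gen_pos (J 0 s)); try lra. intros; apply J_cont; auto.
  intros x Hx. unfold J, Rpower. simpl. rewrite Rmult_1_r. left; apply Rmult_lt_0_compat; apply exp_pos.
  apply IG_J; auto.
Qed.

Lemma I_quad s lam : 0 < s -> 0 <= lam ^ 2 * I 0 s + 2 * lam * I 1 s + I 2 s.
Proof.
  intros Hs.
  assert (G : is_RInt_gen (fun x => lam ^ 2 * J 0 s x + 2 * lam * J 1 s x + J 2 s x) F0 Finf
      (lam ^ 2 * I 0 s + 2 * lam * I 1 s + I 2 s)).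
  { exact (is_RInt_gen_plus _ _ _ _ (is_RInt_gen_plus _ _ _ _ (IG_scal _ _ _ (IG_J 0 s Hs)) (IG_scal _ _ _ (IG_J 1 s Hs))) (IG_J 2 s Hs)). }
  apply (IG_nonneg _ _) with (2 := G). intros x Hx.
  assert (E : lam ^ 2 * J 0 s x + 2 * lam * J 1 s x + J 2 s x = (exp (- x) * Rpower x (s - 1)) * (lam + ln x) ^ 2)
    by (unfold J; simpl; ring).
  rewrite E. apply Rmult_le_pos. unfold Rpower; left; apply Rmult_lt_0_compat; apply exp_pos. apply pow2_ge_0.
Qed.

Lemma I_cs s : 0 < s -> I 1 s * I 1 s <= I 2 s * I 0 s.
Proof.
  intros Hs. assert (H0 := I0_pos s Hs).
  assert (H := I_quad s (- I 1 s / I 0 s) Hs).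
  replace ((- I 1 s / I 0 s) ^ 2 * I 0 s + 2 * (- I 1 s / I 0 s) * I 1 s + I 2 s) with
    ((I 2 s * I 0 s - I 1 s * I 1 s) / I 0 s) in H by (field; lra).
  assert (0 <= I 2 s * I 0 s - I 1 s * I 1 s).
  { apply Rmult_le_reg_r with (/ I 0 s). apply Rinv_0_lt_compat; auto. rewrite Rmult_0_l. exact H. }
  lra.
Qed.

Definition psi (s : R) : R := I 1 s / I 0 s.

Lemma psi_deriv s : 0 < s -> is_derive psi s ((I 2 s * I 0 s - I 1 s * I 1 s) / I 0 s ^ 2).
Proof.
  intros Hs. unfold psi. apply is_derive_div. apply I_deriv; auto. apply I_deriv; auto.
  pose proof (I0_pos s Hs). lra.
Qed.

Lemma psi_mono x y : 0 < x -> x <= y -> psi x <= psi y.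
Proof.
  intros Hx Hxy.
  destruct (MVT_gen psi x y (fun s => (I 2 s * I 0 s - I 1 s * I 1 s) / I 0 s ^ 2)) as [c [Hc E]].
  - intros z Hz. apply psi_deriv. rewrite Rmin_left in Hz by lra. lra.
  - intros z Hz. rewrite Rmin_left in Hz by lra. apply continuity_pt_filterlim.
    apply contR. eexists. apply psi_deriv. lra.
  - rewrite Rmin_left in Hc by lra. rewrite Rmax_right in Hc by lra.
    assert (0 < I 0 c) by (apply I0_pos; lra).
    assert (0 <= (I 2 c * I 0 c - I 1 c * I 1 c) / I 0 c ^ 2).
    { apply Rmult_le_pos. pose proof (I_cs c ltac:(lra)). lra. left; apply Rinv_0_lt_compat; apply pow_lt; auto. }
    assert (0 <= (I 2 c * I 0 c - I 1 c * I 1 c) / I 0 c ^ 2 * (y - x)) by (apply Rmult_le_pos; lra).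
    lra.
Qed.

Lemma lim_Ef_0 s : 0 < s -> filterlim (fun x => - Ef s x) F0 (locally 0).
Proof.
  intros Hs. apply filterlim_locally. intros eps.
  assert (He : 0 < exp (ln eps / s)) by apply exp_pos.
  apply filter_imp with (P := fun x => 0 < x < exp (ln eps / s)); [|apply F0_lt; auto].
  intros x Hx. apply ball_R. unfold minus, plus, opp; simpl. 
  rewrite Rminus_0_r, Rabs_Ropp, Rabs_pos_eq by (left; apply Ef_pos).
  apply Rle_lt_trans with (1 := Ef_le_pow s x ltac:(lra)).
  unfold Rpower. rewrite <- (exp_ln eps) by (destruct eps; auto).
  apply exp_increasing.
  assert (ln x < ln eps / s) by (rewrite <- (ln_exp (ln eps / s)); apply ln_increasing; lra).
  apply Rmult_lt_compat_l with (r := s) in H; auto.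
  replace (s * (ln eps / s)) with (ln eps) in H by (field; lra). lra.
Qed.

Lemma lim_Ef_inf s : 0 < s -> filterlim (fun x => - Ef s x) Finf (locally 0).
Proof.
  intros Hs. apply filterlim_locally. intros eps.
  set (K := exp ((s + 2) * ln (s + 2))). assert (HK : 0 < K) by apply exp_pos.
  exists (Rmax 1 (K / eps)). intros x Hx.
  assert (H1 : 1 <= Rmax 1 (K / eps)) by apply Rmax_l.
  assert (H2 : K / eps <= Rmax 1 (K / eps)) by apply Rmax_r.
  apply ball_R. unfold minus, plus, opp; simpl.
  rewrite Rminus_0_r, Rabs_Ropp, Rabs_pos_eq by (left; apply Ef_pos).
  apply Rle_lt_trans with (1 := Ef_le_invsq s x ltac:(lra) ltac:(lra)). fold K.
  destruct eps as [e He]; simpl in *.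
  assert (K < e * x) by (apply Rmult_lt_reg_r with (/ e); [apply Rinv_0_lt_compat; auto|]; 
     replace (e * x * / e) with x by (field; lra); unfold Rdiv in H2; lra).
  apply Rmult_lt_reg_r with (x ^ 2). nra.
  rewrite Rmult_assoc, Rinv_l, Rmult_1_r by nra. nra.
Qed.

Lemma I0_succ s : 0 < s -> I 0 (s + 1) = s * I 0 s.
Proof.
  intros Hs.
  set (f := fun x => - Ef s x).
  set (g := fun x => J 0 (s + 1) x - s * J 0 s x).
  assert (Hd : forall x, 0 < x -> is_derive f x (g x)).
  { intros x Hx. unfold f, g, Ef, J, Rpower. auto_derive. lra.
    replace (s + 1 - 1) with s by ring.
    assert (E : exp (s * ln x) = exp ((s - 1) * ln x) * x).
    { replace (s * ln x) with ((s - 1) * ln x + ln x) by ring. rewrite exp_plus, exp_ln; auto. }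
    rewrite E. simpl. field. lra. }
  assert (Hgc : forall x, 0 < x -> continuous g x).
  { intros x Hx. apply contR. unfold g, J, Rpower. auto_derive. repeat split; lra. }
  assert (G0 : is_RInt_gen (Derive f) F0 Finf (0 - 0)).
  { apply is_RInt_gen_Derive.
    - apply Filter_prod with (Q := fun a => 0 < a < 1) (R := fun b => 1 < b).
      apply F0_lt; lra. apply Finf_gt. intros a b Ha Hb x Hx. simpl in Hx.
      rewrite Rmin_left in Hx by lra. eexists. apply Hd. lra.
    - apply Filter_prod with (Q := fun a => 0 < a < 1) (R := fun b => 1 < b).
      apply F0_lt; lra. apply Finf_gt. intros a b Ha Hb x Hx. simpl in Hx.
      rewrite Rmin_left in Hx by lra.
      apply continuous_ext_loc with g.
      exists (mkposreal (x / 2) ltac:(lra)). intros y Hy. assert (Hy' : Rabs (y - x) < x / 2) by exact Hy. apply Rlt_le in Hy'. apply abs_bnd in Hy'.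
      symmetry. apply is_derive_unique. apply Hd. lra.
      apply Hgc. lra.
    - apply lim_Ef_0; auto.
    - apply lim_Ef_inf; auto. }
  assert (G1 : is_RInt_gen g F0 Finf 0).
  { rewrite Rminus_0_r in G0. apply (is_RInt_gen_ext (Derive f)); auto.
    apply Filter_prod with (Q := fun a => 0 < a < 1) (R := fun b => 1 < b).
    apply F0_lt; lra. apply Finf_gt. intros a b Ha Hb x Hx. simpl in Hx.
    rewrite Rmin_left in Hx by lra. apply is_derive_unique. apply Hd. lra. }
  assert (G2 : is_RInt_gen g F0 Finf (I 0 (s + 1) - s * I 0 s)).
  { assert (Hs1 : 0 < s + 1) by lra. exact (is_RInt_gen_minus _ _ _ _ (IG_J 0 (s + 1) Hs1) (IG_scal _ s _ (IG_J 0 s Hs))). }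
  apply (is_RInt_gen_unique (V:=R_CompleteNormedModule)) in G1.
  apply (is_RInt_gen_unique (V:=R_CompleteNormedModule)) in G2. 
  rewrite G1 in G2. lra.
Qed.


Lemma psi_succ s : 0 < s -> psi (s + 1) = psi s + / s.
Proof.
  intros Hs.
  assert (D1 : is_derive (fun u => I 0 (u + 1)) s (I 1 (s + 1))).
  { assert (H := is_derive_comp (I 0) (fun u => u + 1) s (I 1 (s + 1)) 1).
    simpl in H. unfold scal in H; simpl in H; unfold mult in H; simpl in H. rewrite Rmult_1_l in H.
    apply H. apply I_deriv; lra. auto_derive; auto; ring. }
  assert (D2 : is_derive (fun u => u * I 0 u) s (I 0 s + s * I 1 s)).
  { assert (H := is_derive_mult (fun u => u) (I 0) s 1 (I 1 s)).
    unfold mult, plus in H; simpl in H. replace (I 0 s + s * I 1 s) with (1 * I 0 s + s * I 1 s) by ring.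
    apply H. apply (is_derive_id (K:=R_AbsRing)). apply I_deriv; auto. intros; apply Rmult_comm. }
  assert (D1' : is_derive (fun u => u * I 0 u) s (I 1 (s + 1))).
  { apply (is_derive_ext_loc (fun u => I 0 (u + 1))); auto.
    exists (mkposreal (s / 2) ltac:(lra)). intros y Hy. assert (Hy' : Rabs (y - s) < s / 2) by exact Hy.
    apply Rlt_le in Hy'. apply abs_bnd in Hy'. apply I0_succ. lra. }
  apply is_derive_unique in D1'. apply is_derive_unique in D2. rewrite D1' in D2.
  unfold psi. rewrite D2, I0_succ by auto. assert (0 < I 0 s) by (apply I0_pos; auto).
  field. lra.
Qed.

Definition H (n : nat) : R := sum_n_m (fun j : nat => / INR j) 1 n.

Lemma H_S n : H (S n) = H n + / INR (S n).
Proof. unfold H. rewrite sum_n_Sm by lia. reflexivity. Qed.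

Lemma H_0 : H 0 = 0.
Proof. unfold H. rewrite sum_n_m_zero by lia. reflexivity. Qed.

Lemma psi_nat n : psi (INR n + 1) = psi 1 + H n.
Proof.
  induction n. rewrite H_0. simpl. replace (0 + 1) with 1 by ring. ring.
  rewrite S_INR, psi_succ, IHn, H_S, S_INR by (pose proof (pos_INR n); lra). ring.
Qed.

Lemma lnI0_deriv s : 0 < s -> is_derive (fun u => ln (I 0 u)) s (psi s).
Proof.
  intros Hs. assert (H0 := I0_pos s Hs).
  assert (Hc := is_derive_comp ln (I 0) s (/ I 0 s) (I 1 s) (is_derive_ln _ H0) (I_deriv 0 s Hs)).
  unfold scal in Hc; simpl in Hc; unfold mult in Hc; simpl in Hc.
  unfold psi. unfold Rdiv. exact Hc.
Qed.

Lemma psi_ln_bounds (n : nat) : (1 <= n)%nat -> psi (INR n) <= ln (INR n) <= psi (INR n + 1).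
Proof.
  intros Hn. assert (Hn' : 1 <= INR n) by (apply (le_INR 1); auto).
  destruct (MVT_gen (fun u => ln (I 0 u)) (INR n) (INR n + 1) psi) as [c [Hc E]].
  - intros z Hz. apply lnI0_deriv. rewrite Rmin_left in Hz by lra. lra.
  - intros z Hz. rewrite Rmin_left in Hz by lra. apply continuity_pt_filterlim.
    apply (contR (fun u => ln (I 0 u))). eexists. apply lnI0_deriv. lra.
  - rewrite Rmin_left in Hc by lra. rewrite Rmax_right in Hc by lra.
    rewrite I0_succ in E by lra. rewrite ln_mult in E by (try lra; apply I0_pos; lra).
    replace (INR n + 1 - INR n) with 1 in E by ring.
    assert (Hpc : ln (INR n) = psi c) by lra.
    split; rewrite Hpc; apply psi_mono; lra.
Qed.

Lemma euler_gamma_val : euler_gamma = - psi 1.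
Proof.
  unfold euler_gamma.
  set (u := fun n : nat => sum_n_m (fun j : nat => / INR j) 1 n - ln (INR n)).
  assert (Hl : is_lim_seq u (- psi 1)).
  { apply is_lim_seq_incr_1.
    apply is_lim_seq_le_le with (u := fun _ => - psi 1) (w := fun m => - psi 1 + / INR (S m)).
    - intros m. unfold u. fold (H (S m)).
      assert (B1 := psi_ln_bounds (S m) (le_n_S 0 m (Nat.le_0_l m))).
      assert (E1 := psi_nat (S m)). assert (E2 := psi_nat m).
      rewrite <- S_INR in E2. rewrite H_S in E1. rewrite H_S. lra.
    - apply is_lim_seq_const.
    - assert (Hi := is_lim_seq_inv INR p_infty is_lim_seq_INR ltac:(discriminate)). simpl in Hi.
      apply (is_lim_seq_incr_1 (fun n => / INR n)) in Hi.
      assert (Hp := is_lim_seq_plus' _ _ _ _ (is_lim_seq_const (- psi 1)) Hi).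
      rewrite Rplus_0_r in Hp. exact Hp. }
  apply is_lim_seq_unique in Hl. rewrite Hl. reflexivity.
Qed.


Definition fk (k s x : R) : R := exp (- (Rpower x k) / k) * Rpower x (s - 1).

Lemma fk_partial k s a b : 1 <= k -> 0 < s -> 0 < a -> a <= b ->
  is_RInt (fk k s) a b
    (RInt (fun y => exp ((s / k - 1) * ln k) * J 0 (s / k) y) (Rpower a k / k) (Rpower b k / k)).
Proof.
  intros Hk Hs Ha Hab. set (c := exp ((s / k - 1) * ln k)).
  assert (H := is_RInt_comp (V:=R_CompleteNormedModule) (fun y => c * J 0 (s / k) y)
     (fun x => Rpower x k / k) (fun x => Rpower x (k - 1)) a b).
  rewrite Rmin_left in H by lra. rewrite Rmax_right in H by lra.
  apply (is_RInt_ext (fun y => scal (Rpower y (k - 1)) (c * J 0 (s / k) (Rpower y k / k)))).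
  - intros x Hx. rewrite Rmin_left in Hx by lra. rewrite Rmax_right in Hx by lra.
    assert (Hx0 : 0 < x) by lra.
    unfold scal; simpl; unfold mult; simpl. unfold fk, J, c, Rpower. simpl.
    rewrite ln_div by (try lra; apply exp_pos). rewrite ln_exp.
    replace (- exp (k * ln x) / k) with (- (exp (k * ln x) / k)) by (field; lra).
    rewrite Rmult_1_r.
    replace ((s - 1) * ln x) with ((k - 1) * ln x + (s / k - 1) * ln k + (s / k - 1) * (k * ln x - ln k)) by (field; lra).
    rewrite !exp_plus. ring.
  - apply H.
    + intros x Hx. assert (0 < Rpower x k / k) by (unfold Rpower; apply Rdiv_lt_0_compat; [apply exp_pos|lra]).
      apply (continuous_scal_r c (J 0 (s / k))). apply J_cont. auto.
    + intros x Hx. split.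
      * apply is_derive_Reals.
        replace (Rpower x (k - 1)) with (k * Rpower x (k - 1) * / k) by (field; lra).
        apply (derivable_pt_lim_scal_right (fun y => Rpower y k)). apply derivable_pt_lim_power; lra.
      * apply Rpower_cont. lra.
Qed.

Lemma Rpower_le_small a k : 0 < a < 1 -> 1 <= k -> Rpower a k <= a.
Proof.
  intros Ha Hk. unfold Rpower. rewrite <- (exp_ln a) at 2 by lra. apply exp_le_mono.
  assert (ln a < 0) by (rewrite <- ln_1; apply ln_increasing; lra). nra.
Qed.

Lemma Rpower_ge_big b k : 1 < b -> 1 <= k -> b <= Rpower b k.
Proof.
  intros Hb Hk. unfold Rpower. rewrite <- (exp_ln b) at 1 by lra. apply exp_le_mono.
  assert (0 < ln b) by (rewrite <- ln_1; apply ln_increasing; lra). nra.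
Qed.

Lemma Gk_eq k s : 1 <= k -> 0 < s -> Gamma_k k s = exp ((s / k - 1) * ln k) * I 0 (s / k).
Proof.
  intros Hk Hs. set (c := exp ((s / k - 1) * ln k)).
  unfold Gamma_k. apply (is_RInt_gen_unique (V:=R_CompleteNormedModule)).
  assert (G := IG_scal _ c _ (IG_J 0 (s / k) ltac:(apply Rdiv_lt_0_compat; lra))).
  intros P HP. specialize (G P HP). destruct G as [Q R HQ HR HQR].
  destruct (F0_elim _ HQ) as [d [Hd HQd]]. destruct HR as [M HM].
  apply Filter_prod with (Q := fun a => 0 < a < Rmin 1 d) (R := fun b => Rmax 1 (k * M) < b).
  - apply F0_lt. apply Rmin_glb_lt; lra.
  - apply Finf_gt.
  - intros a b Ha Hb. simpl.
    assert (Ha1 : a < 1) by (apply Rlt_le_trans with (2 := Rmin_l 1 d); lra).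
    assert (Had : a < d) by (apply Rlt_le_trans with (2 := Rmin_r 1 d); lra).
    assert (Hb1 : 1 < b) by (apply Rle_lt_trans with (2 := Hb); apply Rmax_l).
    assert (HbM : k * M < b) by (apply Rle_lt_trans with (2 := Hb); apply Rmax_r).
    destruct (HQR (Rpower a k / k) (Rpower b k / k)) as [y [Hy1 Hy2]].
    + apply HQd. split. unfold Rpower; apply Rdiv_lt_0_compat; [apply exp_pos|lra].
      assert (Rpower a k <= a) by (apply Rpower_le_small; lra).
      assert (Rpower a k / k <= Rpower a k) by (apply Rmult_le_reg_r with k; [lra|]; unfold Rdiv; rewrite Rmult_assoc, Rinv_l by lra; 
        assert (0 < Rpower a k) by (unfold Rpower; apply exp_pos); nra).
      lra.
    + apply HM. assert (b <= Rpower b k) by (apply Rpower_ge_big; lra).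
      apply Rmult_lt_reg_r with k. lra. unfold Rdiv. rewrite Rmult_assoc, Rinv_l by lra. nra.
    + exists y. split; auto. simpl in Hy1.
      apply (is_RInt_unique (V:=R_CompleteNormedModule)) in Hy1. rewrite <- Hy1.
      apply fk_partial; lra.
Qed.

Lemma digamma_psi t : 0 < t -> digamma t = psi t.
Proof.
  intros Ht. unfold digamma, psi. rewrite Gamma_I. f_equal. apply is_derive_unique. apply I_deriv; auto.
Qed.

Lemma psi_k_val k t : 1 <= k -> 0 < t -> psi_k k t = ln k / k + psi (t / k) / k.
Proof.
  intros Hk Ht. unfold psi_k. apply is_derive_unique.
  apply (is_derive_ext_loc (fun s => (s / k - 1) * ln k + ln (I 0 (s / k)))).
  - exists (mkposreal (t / 2) ltac:(lra)). intros y Hy. assert (Hy' : Rabs (y - t) < t / 2) by exact Hy.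
    apply Rlt_le in Hy'. apply abs_bnd in Hy'.
    rewrite Gk_eq by lra. rewrite ln_mult. rewrite ln_exp. reflexivity. apply exp_pos.
    apply I0_pos. apply Rdiv_lt_0_compat; lra.
  - assert (Htk : 0 < t / k) by (apply Rdiv_lt_0_compat; lra).
    assert (D1 := is_derive_comp (fun u => ln (I 0 u)) (fun s => s / k) t (psi (t / k)) (/ k) (lnI0_deriv _ Htk)).
    assert (D2 : is_derive (fun s => s / k) t (/ k)) by (auto_derive; [auto|field; lra]).
    specialize (D1 D2).
    assert (D3 : is_derive (fun s => (s / k - 1) * ln k) t (ln k / k)) by (auto_derive; [auto|field; lra]).
    assert (D := is_derive_plus _ _ _ _ _ D3 D1).
    unfold plus, scal in D; simpl in D; unfold mult in D; simpl in D.
    replace (ln k / k + psi (t / k) / k) with (ln k / k + / k * psi (t / k)) by (field; lra). exact D.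
Qed.

Theorem lemma3p5 (a b k t : R) (hb : 0 < b) (hab : b <= a) (hk : 1 <= k) (ht : 0 < t) :
  (k * a * euler_gamma - b * euler_gamma) / k + b / k * ln k + (a - b) / t
    + a * digamma t - b * psi_k k t >= 0.
Proof.
  rewrite euler_gamma_val, digamma_psi, psi_k_val by lra.
  assert (Htk : 0 < t / k) by (apply Rdiv_lt_0_compat; lra).
  assert (E1 := psi_succ t ht). assert (E2 := psi_succ (t / k) Htk).
  set (X := psi (t + 1) - psi 1). set (Y := psi (t / k + 1) - psi 1).
  assert (HY : 0 <= Y) by (unfold Y; assert (psi 1 <= psi (t / k + 1)) by (apply psi_mono; lra); lra).
  assert (HXY : Y <= X) by (unfold X, Y; assert (psi (t / k + 1) <= psi (t + 1)); [apply psi_mono; [lra|]; 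
     assert (t / k <= t) by (apply Rmult_le_reg_r with k; [lra|]; unfold Rdiv; rewrite Rmult_assoc, Rinv_l by lra; nra); lra | lra]).
  assert (E : (k * a * - psi 1 - b * - psi 1) / k + b / k * ln k + (a - b) / t + a * psi t -
     b * (ln k / k + psi (t / k) / k) = a * X - b / k * Y).
  { unfold X, Y. rewrite E1, E2. field. lra. }
  rewrite E.
  assert (HB : 0 < b / k <= b) by (split; [apply Rdiv_lt_0_compat; lra|apply Rmult_le_reg_r with k; [lra|]; unfold Rdiv; rewrite Rmult_assoc, Rinv_l by lra; nra]).
  assert (0 <= (a - b / k) * X) by (apply Rmult_le_pos; lra).
  assert (0 <= b / k * (X - Y)) by (apply Rmult_le_pos; lra).
  nra.
Qed.
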